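(* Let $k\ge1$ and let $g_1,\dots,g_n$ be the columns of $G_k^\beta$. If $g_i=\lambda g_j$ for some $i,j\in\{1,\dots,n\}$ and $\lambda\in R$, then $\lambda=1$ and $i=j$.
   Context: Let $R$ be a finite commutative chain ring with maximal ideal $\langle\gamma\rangle$, nilpotency index $s$ and residue field $R/\langle\gamma\rangle\cong\mathbb{F}_q$. Fix coset representatives $T=\{e_0,\dots,e_{q-1}\}$ with $e_0=0,e_1=1$, ordered $e_0<\dots<e_{q-1}$; each $r\in R$ is uniquely $\sum_{i=0}^{s-1}r_i\gamma^i$, $r_i\in T$; order $R$ by $x>y$ iff $x_i>y_i$ in $T$ for the largest $i$ with $x_i\neq y_i$; list $R=\{\rho_0,\dots,\rho_{q^s-1}\}$ increasingly. $\mathbf{a}^{(m)}$ is the constant vector of length $m$. Define $G_1^\alpha=(\rho_0\ \cdots\ \rho_{q^s-1})$ and, for $k>1$, $G_k^\alpha$ as the matrix of $q^s$ column blocks, the $j$-th having first row $\boldsymbol{\rho_j}^{(q^{s(k-1)})}$ and $G_{k-1}^\alpha$ below. List $\langle\gamma\rangle$ increasingly as $a_0\gamma<\dots<a_{q^{s-1}-1}\gamma$ ($a_0\gamma=0$). Define $G_1^\beta=(1)$ and, for $k>1$, $G_k^\beta$ as the matrix with column blocks: first a block with first row $\mathbf{1}^{(q^{s(k-1)})}$ and $G_{k-1}^\alpha$ below; then for each $j=0,\dots,q^{s-1}-1$ a block with first row the constant vector with entry $a_j\gamma$ and $G_{k-1}^\beta$ below. *)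

(* Defs.v *)
From HB Require Import structures.
From mathcomp Require Import all_boot all_order all_algebra.
Set Implicit Arguments. Unset Strict Implicit. Unset Printing Implicit Defensive.
Import GRing.Theory.
Local Open Scope ring_scope.

Section ChainRing.
Variable R : finComNzRingType.

Definition is_ideal (I : {set R}) : bool :=
  [&& (0 : R) \in I,
      [forall x in I, forall y in I, x + y \in I] &
      [forall r : R, forall x in I, r * x \in I]].

Definition pideal (g : R) : {set R} := [set g * x | x : R].

Definition chain_ring : Prop :=
  forall I J : {set R}, is_ideal I -> is_ideal J -> (I \subset J) || (J \subset I).

Definition maximal_ideal (M : {set R}) : Prop :=
  [/\ is_ideal M, (1 : R) \notin M &
      forall J : {set R}, is_ideal J -> M \subset J -> J = M \/ (1 : R) \in J].

Definition nilpotency_index (g : R) (s : nat) : Prop :=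
  g ^+ s = 0 /\ forall t, (t < s)%N -> g ^+ t != 0.

(* T = [:: e_0; ...; e_(q-1)] is a set of coset representatives of R/<g>,
   listed in the order e_0 < ... < e_(q-1), with e_0 = 0 and e_1 = 1 *)
Definition coset_reps (g : R) (T : seq R) : Prop :=
  [/\ uniq T, (1 < size T)%N, T`_0 = 0, T`_1 = 1 &
      forall r : R, exists! t, t \in T /\ r - t \in pideal g].

(* rho j : the j-th element of R in the increasing order, 0 <= j < q^s.
   Writing r = sum_(i<s) r_i g^i (r_i in T), the order compares the digit
   indices reverse-lexicographically; hence rho j is the element whose digit
   r_i is e_(d_i), where d_i is the i-th base-q digit of j. *)
Definition rho (g : R) (s : nat) (T : seq R) (j : nat) : R :=
  \sum_(i < s) T`_((j %/ (size T) ^ i) %% size T) * g ^+ i.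

(* a_j g : the j-th element of <g> in increasing order (0 <= j < q^(s-1));
   it is the element with digits (0, d_0(j), d_1(j), ...), i.e. rho (q*j). *)
Definition agam (g : R) (s : nat) (T : seq R) (j : nat) : R :=
  rho g s T (size T * j).

(* columns of G_k^alpha, left to right; each column is a seq of length k *)
Fixpoint alpha_cols (g : R) (s : nat) (T : seq R) (k : nat) : seq (seq R) :=
  match k with
  | 0 => [:: [::]]
  | k'.+1 => [seq rho g s T j :: c | j <- iota 0 (size T ^ s),
                                      c <- alpha_cols g s T k']
  end.

(* columns of G_k^beta, left to right (k >= 1); G_1^beta = (1) *)
Fixpoint beta_cols (g : R) (s : nat) (T : seq R) (k : nat) : seq (seq R) :=
  match k with
  | 0 => [::]
  | 0.+1 => [:: [:: 1]]
  | k'.+1 => [seq 1 :: c | c <- alpha_cols g s T k'] ++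
             [seq agam g s T j :: c | j <- iota 0 (size T ^ s.-1),
                                      c <- beta_cols g s T k']
  end.

End ChainRing.

(* Main.v *)
Require Import Defs.
From HB Require Import structures.
From mathcomp Require Import all_boot all_order all_algebra.
Set Implicit Arguments.
Import GRing.Theory.
Local Open Scope ring_scope.


Section Aux.
Variables (R : finComNzRingType) (gam : R) (s : nat) (T : seq R).
Hypothesis Hmax : maximal_ideal (pideal gam).
Hypothesis Hnil : nilpotency_index gam s.
Hypothesis HT : coset_reps gam T.

Local Notation I := (pideal gam).

Lemma memI x : reflect (exists y, x = gam * y) (x \in I).
Proof.
apply: (iffP imsetP) => [[y _ ->]|[y ->]]; by exists y.
Qed.

Lemma I0 : 0 \in I. Proof. by apply/memI; exists 0; rewrite mulr0. Qed.
Lemma IB x y : x \in I -> y \in I -> x - y \in I.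
Proof. move=> /memI[a ->] /memI[b ->]; apply/memI; exists (a - b); by rewrite mulrBr. Qed.
Lemma ID x y : x \in I -> y \in I -> x + y \in I.
Proof. move=> /memI[a ->] /memI[b ->]; apply/memI; exists (a + b); by rewrite mulrDr. Qed.
Lemma IM r x : x \in I -> r * x \in I.
Proof. move=> /memI[a ->]; apply/memI; exists (r * a); by rewrite mulrCA. Qed.
Lemma IMr r x : x \in I -> x * r \in I.
Proof. by rewrite mulrC; apply: IM. Qed.
Lemma Igam x : gam * x \in I.
Proof. by apply/memI; exists x. Qed.

Lemma notI1 : (1 : R) \notin I.
Proof. by case: Hmax. Qed.

Lemma unitI u : u \notin I -> exists v, u * v = 1.
Proof.
move=> uI.
case: Hmax => idM _ Hm.
pose J := [set gam * x + u * r | x : R, r : R].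
have memJ z : reflect (exists x r, z = gam * x + u * r) (z \in J).
  apply: (iffP imset2P) => [[x r _ _ ->]|[x [r ->]]]; first by exists x, r.
  by exists x r.
have idJ : is_ideal J.
  apply/and3P; split.
  - by apply/memJ; exists 0, 0; rewrite !mulr0 addr0.
  - apply/forall_inP => x /memJ[a [b ->]]; apply/forall_inP => y /memJ[c [d ->]].
    apply/memJ; exists (a + c), (b + d); rewrite !mulrDr.
    by rewrite addrACA.
  - apply/forallP => r; apply/forall_inP => x /memJ[a [b ->]].
    apply/memJ; exists (r * a), (r * b); by rewrite mulrDr (mulrCA r gam a) (mulrCA r u b).
have sub : I \subset J.
  apply/subsetP => x /memI[a ->]; apply/memJ; exists a, 0; by rewrite mulr0 addr0.
case: (Hm J idJ sub) => [EJ|/memJ[x [r E]]].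
  by case/negP: uI; rewrite -EJ; apply/memJ; exists 0, 1; rewrite mulr0 add0r mulr1.
have E2 : u * r = 1 - gam * x by rewrite E addrAC subrr add0r.
exists (r * \sum_(i < s) (gam * x) ^+ i).
rewrite mulrA E2.
have := subrX1 (gam * x) s.
rewrite exprMn Hnil.1 mul0r sub0r => H.
by rewrite -opprB mulNr -H opprK.
Qed.

Lemma q_gt1 : (1 < size T)%N. Proof. by case: HT. Qed.

Lemma Tdist a b : (a < size T)%N -> (b < size T)%N -> T`_a - T`_b \in I -> a = b.
Proof.
case: HT => uT _ _ _ Hr ha hb hI.
have [t [_ Ht]] := Hr T`_a.
have e1 : t = T`_a by apply: Ht; split; [exact: mem_nth | rewrite subrr; exact: I0].
have e2 : t = T`_b by apply: Ht; split; [exact: mem_nth | done].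
by apply/eqP; rewrite -(nth_uniq 0 ha hb uT) -e1 -e2.
Qed.

End Aux.


Lemma digits_eq q n a b : (0 < q)%N -> (a < q ^ n)%N -> (b < q ^ n)%N ->
  (forall i, (i < n)%N -> ((a %/ q ^ i) %% q = (b %/ q ^ i) %% q)%N) -> a = b.
Proof.
move=> q0; elim: n a b => [|n IH] a b.
  by rewrite expn0 !ltnS !leqn0 => /eqP -> /eqP ->.
move=> ha hb hd.
rewrite (divn_eq a q) (divn_eq b q).
have h0 := hd 0%N isT; rewrite expn0 !divn1 in h0.
rewrite h0; congr (_ * _ + _)%N.
apply: IH.
- by rewrite ltn_divLR // -expnSr.
- by rewrite ltn_divLR // -expnSr.
move=> i hi; have := hd i.+1 hi; by rewrite expnS !divnMA.
Qed.

Section Aux2.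
Variables (R : finComNzRingType) (gam : R) (s : nat) (T : seq R).
Hypothesis Hmax : maximal_ideal (pideal gam).
Hypothesis Hnil : nilpotency_index gam s.
Hypothesis HT : coset_reps gam T.

Lemma sum_digits n : forall t (d e : nat -> nat), (t + n <= s)%N ->
  (forall i, d i < size T)%N -> (forall i, e i < size T)%N ->
  gam ^+ t * (\sum_(i < n) (T`_(d i) - T`_(e i)) * gam ^+ i) = 0 ->
  forall i, (i < n)%N -> d i = e i.
Proof.
elim: n => [|n IH] t d e hs hd he H i //.
rewrite big_ord_recl /= expr0 mulr1 in H.
set S' := \sum_(i < n) (T`_(d (i.+1)) - T`_(e (i.+1))) * gam ^+ i.
have ES : \sum_(i < n) (T`_(d (bump 0 i)) - T`_(e (bump 0 i))) * gam ^+ (bump 0 i)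
   = gam * S'.
  rewrite /S' mulr_sumr; apply: eq_bigr => j _.
  by rewrite /bump /= add1n exprS mulrCA.
rewrite ES in H.
have d0 : d 0%N = e 0%N.
  apply: (Tdist HT) => //.
  apply/negPn/negP => nI.
  have uI : T`_(d 0%N) - T`_(e 0%N) + gam * S' \notin pideal gam.
    apply/negP => uI; case/negP: nI.
    have := IB uI (@Igam _ gam S'); by rewrite addrK.
  have [v Hv] := @unitI _ _ _ Hmax Hnil _ uI.
  have : gam ^+ t = 0 by rewrite -[gam ^+ t]mulr1 -Hv mulrA H mul0r.
  by apply/eqP; apply: Hnil.2; apply: leq_trans hs; rewrite addnS ltnS leq_addr.
rewrite d0 subrr add0r mulrA -exprSr in H.
have IH' := IH t.+1 (fun i => d i.+1) (fun i => e i.+1).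
case: i => [|i] //= hi.
apply: IH' => //; by rewrite addSn -addnS.
Qed.

Lemma rho_inj a b : (a < size T ^ s)%N -> (b < size T ^ s)%N ->
  rho gam s T a = rho gam s T b -> a = b.
Proof.
move=> ha hb E.
have q1 := q_gt1 HT.
have q0 : (0 < size T)%N by apply: ltnW.
apply: (@digits_eq _ s a b q0 ha hb) => i hi.
refine (@sum_digits s 0%N (fun i => (a %/ size T ^ i) %% size T)%N (fun i => (b %/ size T ^ i) %% size T)%N _ _ _ _ i hi) => //; first by move=> j; rewrite ltn_mod.
  by move=> j; rewrite ltn_mod.
rewrite expr0 mul1r.
transitivity (rho gam s T a - rho gam s T b); last by rewrite E subrr.
rewrite /rho -sumrB; apply: eq_bigr => j _; by rewrite mulrBl.
Qed.

End Aux2.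


Section Aux3.
Variables (R : finComNzRingType) (gam : R) (s : nat) (T : seq R).
Hypothesis Hmax : maximal_ideal (pideal gam).
Hypothesis Hnil : nilpotency_index gam s.
Hypothesis HT : coset_reps gam T.

Definition good (c : seq R) := exists p, [/\ (p < size c)%N, c`_p = 1 &
   forall q, (q < p)%N -> c`_q \in pideal gam].

Lemma s_gt0 : (0 < s)%N.
Proof.
case: Hnil; case: s => // H _; by move/eqP: H; rewrite expr0 oner_eq0.
Qed.

Lemma agamI j : agam gam s T j \in pideal gam.
Proof.
rewrite /agam /rho; case: s => [|s']; first by rewrite big_ord0 I0.
rewrite big_ord_recl /= expn0 divn1 modnMr.
case: HT => _ _ -> _ _; rewrite mul0r add0r.
apply: (big_ind (fun x => x \in pideal gam)); first exact: I0.
  by move=> x y; apply: ID.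
move=> i _; rewrite /bump /= add1n exprS mulrCA; exact: Igam.
Qed.

Lemma agam_inj j1 j2 : (j1 < size T ^ s.-1)%N -> (j2 < size T ^ s.-1)%N ->
  agam gam s T j1 = agam gam s T j2 -> j1 = j2.
Proof.
have s0 := s_gt0; have q1 := q_gt1 HT.
have q0 : (0 < size T)%N by apply: ltnW.
move=> h1 h2 E.
have lt j : (j < size T ^ s.-1)%N -> (size T * j < size T ^ s)%N.
  by move=> hj; rewrite -(prednK s0) expnS ltn_pmul2l.
have := rho_inj Hmax Hnil HT (lt _ h1) (lt _ h2) E.
by move/eqP; rewrite eqn_pmul2l // => /eqP.
Qed.

Lemma alpha_uniq k : uniq (alpha_cols gam s T k).
Proof.
elim: k => [|k IH] //=.
apply: allpairs_uniq => //; first exact: iota_uniq.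
move=> [x y] [x' y'] /allpairsP[[a b] [ha hb [-> ->]]] /allpairsP[[a' b'] [ha' hb' [-> ->]]] /=.
case=> /rho_inj E ->; congr (_, _).
rewrite mem_iota in ha; rewrite mem_iota in ha'.
exact: (E Hmax Hnil HT).
Qed.

Lemma betaS k : beta_cols gam s T k.+2 =
  [seq 1 :: c | c <- alpha_cols gam s T k.+1] ++
  [seq agam gam s T j :: c | j <- iota 0 (size T ^ s.-1), c <- beta_cols gam s T k.+1].
Proof. by []. Qed.

Lemma beta_prop k : uniq (beta_cols gam s T k.+1) /\
  forall c, c \in beta_cols gam s T k.+1 -> good c.
Proof.
elim: k => [|k [IHu IHg]].
  split=> // c; rewrite inE => /eqP ->; exists 0%N; split=> //.
rewrite betaS; split.
  rewrite cat_uniq; apply/and3P; split.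
  - rewrite map_inj_uniq; first exact: alpha_uniq.
    by move=> x y [].
  - apply/hasP => -[z /allpairsP[[a b] [_ _ ->]]] /mapP[c _] /= [E _].
    by case/negP: (notI1 Hmax); rewrite -E agamI.
  - apply: allpairs_uniq => //; first exact: iota_uniq.
    move=> [x y] [x' y'] /allpairsP[[a b] [ha hb [-> ->]]] /allpairsP[[a' b'] [ha' hb' [-> ->]]] /=.
    case=> E ->; congr (_, _).
    rewrite mem_iota in ha; rewrite mem_iota in ha'.
    exact: agam_inj.
move=> c; rewrite mem_cat => /orP[/mapP[c' _ ->]|/allpairsP[[a b] [_ hb ->]]].
  by exists 0%N; split.
have [p [hp h1 hq]] := IHg _ hb.
exists p.+1; split=> //= -[|q] hq' /=; first exact: agamI.
exact: hq.
Qed.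

End Aux3.

Unset Implicit Arguments.


Theorem proposition2p8 (R : finComNzRingType) (gam : R) (s : nat) (T : seq R)
    (Hchain : chain_ring R) (Hmax : maximal_ideal (pideal gam))
    (Hnil : nilpotency_index gam s) (HT : coset_reps gam T)
    (k : nat) (Hk : (1 <= k)%N) (i j : nat) (lam : R)
    (Hi : (i < size (beta_cols gam s T k))%N)
    (Hj : (j < size (beta_cols gam s T k))%N)
    (Heq : nth [::] (beta_cols gam s T k) i
           = [seq lam * x | x <- nth [::] (beta_cols gam s T k) j]) :
  lam = 1 /\ i = j.
Proof.
case: k Hk Hi Hj Heq => // k _ Hi Hj Heq.
have [Hu Hg] := beta_prop Hmax Hnil HT k.
set ci := nth [::] _ i in Heq; set cj := nth [::] _ j in Heq.
have [p1 [hpi ei Hpi]] := Hg _ (mem_nth [::] Hi).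
have [p2 [hpj ej Hpj]] := Hg _ (mem_nth [::] Hj).
rewrite -/ci in hpi ei Hpi; rewrite -/cj in hpj ej Hpj.
have hsz : size ci = size cj by rewrite Heq size_map.
have hc q : (q < size cj)%N -> ci`_q = lam * cj`_q.
  by move=> hq; rewrite Heq (nth_map 0).
have n1 := notI1 Hmax.
have [lt1|lt2|eq12] := ltngtP p1 p2.
- case/negP: n1; rewrite -ei hc; last by rewrite -hsz.
  by apply: IM; apply: Hpj.
- have lI : lam \in pideal gam by rewrite -[lam]mulr1 -ej -hc //; apply: Hpi.
  case/negP: n1; rewrite -ei hc; last by rewrite -hsz.
  exact: IMr.
have l1 : lam = 1 by rewrite -[lam]mulr1 -{1}ej -hc // -eq12 ei.
split=> //.
have ecc : ci = cj by rewrite Heq l1 (eq_map (@mul1r R)) map_id.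
by apply/eqP; rewrite -(nth_uniq [::] Hi Hj Hu); apply/eqP; exact: ecc.
Qed.
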